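(* Let $\mathbf C$ be a category of coframes and $(L,\nu_L)$ an adherence $\mathbf C$-object. (1) The quasi-closed elements of $L$ form a subcoframe of $L$ (closed under finite suprema and arbitrary infima). (2) The closed elements of $L$ form a sublattice of $L$ (closed under finite suprema and finite infima).
   Context: A category of coframes has coframes as objects and coframe morphisms. $\mathcal C_L$ is the set of complemented elements of $L$. An adherence $\mathbf C$-object is a $\mathbf C$-object $L$ with a monotone map $\nu_L:L\to L$ that preserves finite suprema of complemented elements and satisfies $\nu_L(\ell)=\bigwedge\{\nu_L(a):a\in\mathcal C_L,\ a\ge\ell\}$ for every $\ell\in L$. An element $c$ is quasi-closed if $\nu_L(c)\le c$, and closed if it is complemented and quasi-closed. *)

(* Defs.v *)
Record coframe := Coframe {
  car :> Type;
  le : car -> car -> Prop;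
  le_refl : forall x, le x x;
  le_antisym : forall x y, le x y -> le y x -> x = y;
  le_trans : forall x y z, le x y -> le y z -> le x z;
  sup : (car -> Prop) -> car;
  sup_ub : forall S x, S x -> le x (sup S);
  sup_least : forall S u, (forall x, S x -> le x u) -> le (sup S) u;
  inf : (car -> Prop) -> car;
  inf_lb : forall S x, S x -> le (inf S) x;
  inf_greatest : forall S l, (forall x, S x -> le l x) -> le l (inf S);
  join_inf_distr : forall (a : car) (S : car -> Prop),
    sup (fun x => x = a \/ x = inf S) =
    inf (fun y => exists s, S s /\ y = sup (fun x => x = a \/ x = s))
}.

Arguments le {L} : rename.
Arguments sup {L} : rename.
Arguments inf {L} : rename.

Section Ops.
Variable L : coframe.
Definition bot : L := sup (fun _ => False).
Definition top : L := inf (fun _ => False).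
Definition join (a b : L) : L := sup (fun x => x = a \/ x = b).
Definition meet (a b : L) : L := inf (fun x => x = a \/ x = b).

Definition complemented (a : L) : Prop :=
  exists b : L, meet a b = bot /\ join a b = top.

Definition is_adherence (nu : L -> L) : Prop :=
  (forall x y, le x y -> le (nu x) (nu y)) /\
  nu bot = bot /\
  (forall a b, complemented a -> complemented b -> nu (join a b) = join (nu a) (nu b)) /\
  (forall l, nu l = inf (fun y => exists a, complemented a /\ le l a /\ y = nu a)).

Definition quasi_closed (nu : L -> L) (c : L) : Prop := le (nu c) c.
Definition closed_el (nu : L -> L) (c : L) : Prop :=
  complemented c /\ quasi_closed nu c.

Definition is_subcoframe (P : L -> Prop) : Prop :=
  P bot /\ (forall a b, P a -> P b -> P (join a b)) /\
  (forall S : L -> Prop, (forall s, S s -> P s) -> P (inf S)).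

Definition is_sublattice (P : L -> Prop) : Prop :=
  P bot /\ P top /\ (forall a b, P a -> P b -> P (join a b)) /\
  (forall a b, P a -> P b -> P (meet a b)).
End Ops.
Arguments bot {L}. Arguments top {L}. Arguments join {L}. Arguments meet {L}.

(* Main.v *)
Require Import Defs.
From Stdlib Require Import Setoid.

Section S.
Variable L : coframe.
Implicit Types a b c d x y z : L.

Lemma jl a b : le a (join a b). Proof. apply sup_ub; auto. Qed.
Lemma jr a b : le b (join a b). Proof. apply sup_ub; auto. Qed.
Lemma jlub a b u : le a u -> le b u -> le (join a b) u.
Proof. intros; apply sup_least; intros x [->| ->]; auto. Qed.
Lemma ml a b : le (meet a b) a. Proof. apply inf_lb; auto. Qed.
Lemma mr a b : le (meet a b) b. Proof. apply inf_lb; auto. Qed.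
Lemma mglb a b l : le l a -> le l b -> le l (meet a b).
Proof. intros; apply inf_greatest; intros x [->| ->]; auto. Qed.
Lemma botle x : le bot x. Proof. apply sup_least; tauto. Qed.
Lemma letop x : le x top. Proof. apply inf_greatest; tauto. Qed.
Lemma tr x y z : le x y -> le y z -> le x z. Proof. apply le_trans. Qed.

Lemma joinC a b : join a b = join b a.
Proof. apply le_antisym; apply jlub; (apply jl || apply jr). Qed.
Lemma meetC a b : meet a b = meet b a.
Proof. apply le_antisym; apply mglb; (apply ml || apply mr). Qed.

Lemma jinf a S : join a (inf S) = inf (fun y => exists s, S s /\ y = join a s).
Proof. apply join_inf_distr. Qed.

Lemma distr1 a b c : join a (meet b c) = meet (join a b) (join a c).
Proof.
  unfold meet at 1. rewrite jinf.
  apply le_antisym.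
  - apply mglb; apply inf_lb; eexists; (split; [| reflexivity]); auto.
  - apply inf_greatest. intros y [s [[->| ->] ->]]; [apply ml | apply mr].
Qed.

Lemma distr2 x y z : le (meet x (join y z)) (join (meet x y) (meet x z)).
Proof.
  rewrite distr1. apply mglb.
  - eapply tr; [apply ml|]. apply jr.
  - rewrite (joinC (meet x y) z), distr1. apply mglb.
    + eapply tr; [apply ml|]. apply jr.
    + eapply tr; [apply mr|]. apply jlub; [apply jr | apply jl].
Qed.

Lemma compl_join c d : complemented L c -> complemented L d -> complemented L (join c d).
Proof.
  intros [c' [Hc1 Hc2]] [d' [Hd1 Hd2]]. exists (meet c' d'). split.
  - apply le_antisym; [|apply botle].
    rewrite meetC. eapply tr; [apply distr2|]. apply jlub.
    + rewrite <- Hc1. rewrite (meetC c c'). apply mglb; [eapply tr; [apply ml|]; apply ml | apply mr].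
    + rewrite <- Hd1. rewrite (meetC d d'). apply mglb; [eapply tr; [apply ml|]; apply mr | apply mr].
  - apply le_antisym; [apply letop|]. rewrite distr1. apply mglb.
    + rewrite <- Hc2. apply jlub; [eapply tr; [apply jl|]; apply jl | apply jr].
    + rewrite <- Hd2. apply jlub; [eapply tr; [apply jr|]; apply jl | apply jr].
Qed.

Lemma compl_meet c d : complemented L c -> complemented L d -> complemented L (meet c d).
Proof.
  intros [c' [Hc1 Hc2]] [d' [Hd1 Hd2]]. exists (join c' d'). split.
  - apply le_antisym; [|apply botle].
    eapply tr; [apply distr2|]. apply jlub.
    + rewrite <- Hc1. apply mglb; [eapply tr; [apply ml|]; apply ml | apply mr].
    + rewrite <- Hd1. apply mglb; [eapply tr; [apply ml|]; apply mr | apply mr].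
  - apply le_antisym; [apply letop|]. rewrite joinC, distr1. apply mglb.
    + rewrite <- Hc2. apply jlub; [apply jr | eapply tr; [apply jl|]; apply jl].
    + rewrite <- Hd2. apply jlub; [apply jr | eapply tr; [apply jr|]; apply jl].
Qed.

Lemma compl_bot : complemented L bot.
Proof.
  exists top. split; apply le_antisym; try apply botle; try apply letop.
  apply ml. apply jr.
Qed.
Lemma compl_top : complemented L top.
Proof.
  exists bot. split; apply le_antisym; try apply botle; try apply letop.
  apply mr. apply jl.
Qed.

Variable nu : L -> L.
Hypothesis Hnu : is_adherence L nu.

Lemma nu_join a b : le (nu (join a b)) (join (nu a) (nu b)).
Proof.
  destruct Hnu as [Hm [H0 [Hj Hi]]].
  rewrite (joinC (nu a) (nu b)). pose proof (Hi a) as Ha. rewrite Ha.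
  rewrite jinf.
  apply inf_greatest. intros y [s [[c [Hc [Hac ->]]] ->]].
  rewrite (joinC (nu b) (nu c)).
  pose proof (Hi b) as Hb. rewrite Hb.
  rewrite jinf.
  apply inf_greatest. intros y [s [[d [Hd [Hbd ->]]] ->]].
  rewrite <- Hj by assumption.
  apply Hm. apply jlub; [eapply tr; [apply Hac|]; apply jl | eapply tr; [apply Hbd|]; apply jr].
Qed.

Lemma qc_join a b : quasi_closed L nu a -> quasi_closed L nu b -> quasi_closed L nu (join a b).
Proof.
  unfold quasi_closed; intros. eapply tr; [apply nu_join|].
  apply jlub; [eapply tr; [eassumption|]; apply jl | eapply tr; [eassumption|]; apply jr].
Qed.

Lemma qc_inf S : (forall s, S s -> quasi_closed L nu s) -> quasi_closed L nu (inf S).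
Proof.
  destruct Hnu as [Hm _]. unfold quasi_closed; intros H.
  apply inf_greatest; intros x Hx. eapply tr; [apply Hm, inf_lb, Hx|]. auto.
Qed.

Lemma qc_bot : quasi_closed L nu bot.
Proof. destruct Hnu as [_ [H0 _]]. unfold quasi_closed. rewrite H0. apply le_refl. Qed.

End S.

Theorem mainTheorem20 (L : coframe) (nu : L -> L) (Hnu : is_adherence L nu) :
  is_subcoframe L (quasi_closed L nu) /\ is_sublattice L (closed_el L nu).
Proof.
  split.
  - split; [apply qc_bot; auto|]. split; [apply qc_join; auto|]. apply qc_inf; auto.
  - split; [split; [apply compl_bot | apply qc_bot; auto]|].
    split; [split; [apply compl_top | apply letop]|].
    split.
    + intros a b [Ca Qa] [Cb Qb]. split; [apply compl_join; auto | apply qc_join; auto].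
    + intros a b [Ca Qa] [Cb Qb]. split; [apply compl_meet; auto|].
      apply qc_inf; auto. intros s [-> | ->]; auto.
Qed.
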